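(* Let $G$ be a (strong) placement game played on a board $B$. Then there exist simplicial complexes $\Delta$ and $\Gamma$ on the vertex set $\{x_1,\dots,x_n,y_1,\dots,y_o\}$ such that $G$ played on $B$ is equivalent to the game played on $\Gamma$ with the Illegal Ruleset, and equivalent to the game played on $\Delta$ with the Legal Ruleset; that is, under the identification of positions of $G$ with sets of occupied vertices described below, the legal positions of $G$ on $B$ are exactly the legal positions of each of these games (one may take $\Delta=\Delta_{G,B}$, the legal complex, and $\Gamma=\Gamma_{G,B}$, the illegal complex).
   Context: A combinatorial game is a two-player game (players Left and Right) of perfect information and no chance, given by a set of positions, a starting position, and rules specifying legal moves; a legal position is one reachable from the starting position by legal moves. The board is a graph. A (strong) placement game is a combinatorial game such that: (i) the starting position is the empty board; (ii) players place pieces on empty spaces of the board according to the rules; (iii) pieces are never moved or removed; (iv) if a position can be reached by a sequence of legal moves, then every sequence of moves leading to this position consists only of legal moves. Positions are not assumed to alternate between players. A basic position is a board with exactly one piece placed. Label the basic positions by indices; a position of $G$ is identified with the set of vertices of $\{x_1,\dots,x_n,y_1,\dots,y_o\}$ containing $x_i$ iff Left has placed in basic position $i$ and $y_j$ iff Right has placed in basic position $j$. The legal complex $\Delta_{G,B}$ is the simplicial complex whose faces are the sets corresponding to legal positions (equivalently, subsets of the set of a legal position); the illegal complex $\Gamma_{G,B}$ is the simplicial complex whose facets are the sets corresponding to minimal illegal positions. Illegal Ruleset on a simplicial complex $\Gamma$: (1) Left may only play (place pieces) on vertices labelled $x_i$ and Right only on vertices labelled $y_i$; (2) for every facet of $\Gamma$,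 the occupied vertices may not include all vertices of that facet. Legal Ruleset on a simplicial complex $\Delta$: (1) Left may only play on vertices labelled $x_i$ and Right only on vertices labelled $y_i$; (2) the set of occupied vertices must be a face of $\Delta$. *)

(* Defs.v *)
From mathcomp Require Import all_boot.
Set Implicit Arguments. Unset Strict Implicit. Unset Printing Implicit Defensive.

(* Vertex set {x_1..x_n, y_1..y_o}: inl i = x_(i+1) (Left), inr j = y_(j+1) (Right). *)
Definition vtx (n o : nat) : finType := ('I_n + 'I_o)%type.

Section Games.
Variables n o : nat.
Notation V := (vtx n o).

Definition family := {set V} -> Prop.

Definition simplicial_complex (K : family) : Prop :=
  forall S T : {set V}, K S -> T \subset S -> K T.

Definition facet (K : family) (F : {set V}) : Prop :=
  K F /\ forall S : {set V}, K S -> F \subset S -> S = F.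

(* A ruleset: [mv P v] says that placing a piece on vertex v (by Left if v is
   an x-vertex, by Right if it is a y-vertex) is a legal move in position P.
   Positions do not alternate between players. *)
Definition rule := {set V} -> V -> Prop.

Inductive reach (mv : rule) : {set V} -> Prop :=
| reach0 : reach mv set0
| reachS P v : reach mv P -> v \notin P -> mv P v -> reach mv (v |: P).

Definition strong_placement (mv : rule) : Prop :=
  forall P, reach mv P ->
  forall s : seq V, uniq s -> [set x in s] = P ->
  forall (x0 : V) k, k < size s -> mv [set x in take k s] (nth x0 s k).

Definition legal_complex (mv : rule) : family := fun S => reach mv S.

Definition min_illegal (mv : rule) (S : {set V}) : Prop :=
  ~ reach mv S /\ forall T : {set V}, T \proper S -> reach mv T.

Definition illegal_complex (mv : rule) : family :=
  fun S => exists F, min_illegal mv F /\ S \subset F.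

Definition illegal_ruleset (Gam : family) : rule :=
  fun P v => ~ exists F, facet Gam F /\ F \subset v |: P.

Definition legal_ruleset (Del : family) : rule :=
  fun P v => Del (v |: P).

End Games.

(* Main.v *)
From Stdlib Require Import Classical.
Require Import Defs.
From mathcomp Require Import all_boot.

Section Aux.
Variables n o : nat.
Notation V := (vtx n o).
Variable mv : rule n o.
Hypothesis Hstrong : strong_placement mv.

Lemma set_rcons (t : seq V) a : [set x in rcons t a] = a |: [set x in t].
Proof. by apply/setP => x; rewrite !inE mem_rcons in_cons. Qed.

Lemma prefix_reach (s : seq V) : uniq s -> reach mv [set x in s] ->
  forall k, k <= size s -> reach mv [set x in take k s].
Proof.
move=> Hu HP; elim=> [|k IH] Hk.
  rewrite take0; have -> : [set x in [::] : seq V] = set0 by apply/setP=> x; rewrite !inE.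
  exact: reach0.
have Hk' : k < size s by [].
have [x0 _] : exists x0 : V, True by case: (s) Hk => [|a t] //; exists a.
rewrite (take_nth x0 Hk') set_rcons; apply: reachS.
- exact: IH (ltnW Hk).
- rewrite inE; have Hh : ~~ has (mem (take k s)) (drop k s).
    by move: Hu; rewrite -{1}(cat_take_drop k s) cat_uniq => /and3P[].
  apply/negP => Hin; move/hasPn: Hh => /(_ (nth x0 s k)) Hh; move: Hin; apply/negP; apply: Hh.
  have -> : nth x0 s k = nth x0 (drop k s) 0 by rewrite nth_drop addn0.
  by apply: mem_nth; rewrite size_drop subn_gt0.
- by have := @Hstrong _ HP s Hu (erefl _) x0 k Hk'.
Qed.

Lemma down_closed (P T : {set V}) : reach mv P -> T \subset P -> reach mv T.
Proof.
move=> HP HTP.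
set s := enum T ++ enum (P :\: T).
have Hs : [set x in s] = P.
  apply/setP => x; rewrite !inE mem_cat !mem_enum !inE.
  by case: (boolP (x \in T)) => /= xT //; rewrite (subsetP HTP).
have Hu : uniq s.
  rewrite cat_uniq !enum_uniq /= andbT; apply/hasPn => y.
  by rewrite !mem_enum !inE => /andP[].
rewrite -Hs in HP.
have := prefix_reach s Hu HP (size (enum T)).
rewrite take_size_cat // size_cat leq_addr => /(_ isT).
by have -> : [set x in enum T] = T by apply/setP => x; rewrite inE mem_enum.
Qed.

Lemma exists_min k : forall S : {set V}, #|S| <= k -> ~ reach mv S ->
  exists F, min_illegal mv F /\ F \subset S.
Proof.
elim: k => [|k IH] S HS HnS.
  by exfalso; apply: HnS; move: HS; rewrite leqn0 cards_eq0 => /eqP ->; exact: reach0.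
case: (classic (forall T : {set V}, T \proper S -> reach mv T)) => H.
  by exists S; split => //; split.
have [T HT] := not_all_ex_not _ _ H.
have [HT' HnT] := imply_to_and _ _ HT.
have HTc : #|T| <= k by rewrite -ltnS (leq_trans (proper_card HT') HS).
case: (IH T HTc HnT) => F [HF HFT]; exists F; split => //.
exact: subset_trans HFT (proper_sub HT').
Qed.

Lemma facet_not_reach (F : {set V}) : facet (illegal_complex mv) F -> ~ reach mv F.
Proof.
move=> [[F' [HF' HFF']] Hmax].
have := Hmax F' (ex_intro _ F' (conj HF' (subxx _))) HFF'.
by move=> E; subst F'; case: HF'.
Qed.

Lemma min_facet (F : {set V}) : min_illegal mv F -> facet (illegal_complex mv) F.
Proof.
move=> HF; split; first by exists F; split.
move=> S [F' [HF' HSF']] HFS.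
have HFF' := subset_trans HFS HSF'.
case: (boolP (F \proper F')) => Hp.
  by case: HF => HnF _; case: HnF; case: HF' => _ /(_ F Hp).
have EF : F = F' by apply/eqP; move: Hp; rewrite properEneq HFF' andbT negbK.
by subst F'; apply/eqP; rewrite eqEsubset HFS HSF'.
Qed.

End Aux.

Theorem theorem4p4 (n o : nat) (mv : rule n o) (Hstrong : strong_placement mv) :
  simplicial_complex (legal_complex mv) /\
  simplicial_complex (illegal_complex mv) /\
  (forall P : {set vtx n o},
     reach mv P <-> reach (illegal_ruleset (illegal_complex mv)) P) /\
  (forall P : {set vtx n o},
     reach mv P <-> reach (legal_ruleset (legal_complex mv)) P).
Proof.
split; first by move=> S T HS HTS; exact: (@down_closed n o mv Hstrong S T HS HTS).
split.
  move=> S T [F [HF HSF]] HTS; exists F; split => //; exact: subset_trans HTS HSF.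
split => P; split.
- elim => [|Q v HQ IH Hv Hm]; first exact: reach0.
  apply: reachS => // [[F [HF HFs]]].
  apply: (@facet_not_reach n o mv F HF); apply: (@down_closed n o mv Hstrong (v |: Q) F _ HFs).
  exact: reachS.
- elim => [|Q v HQ IH Hv Hm]; first exact: reach0.
  case: (classic (reach mv (v |: Q))) => // Hn; exfalso.
  case: (@exists_min n o mv _ _ (leqnn _) Hn) => F [HF HFs].
  by apply: Hm; exists F; split => //; exact: (@min_facet n o mv).
- elim => [|Q v HQ IH Hv Hm]; first exact: reach0.
  by apply: reachS => //; apply: reachS.
- by elim => [|Q v HQ IH Hv Hm]; [exact: reach0|exact: Hm].
Qed.
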